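(* In the one-shot wage theft problem described in the context, for any effort level $a\in[0,1)$, the problem restricted to effort level $a$ has an optimal solution whose promised wages are $w_L^*(a)=\max\{0,\;u-aC'(a)+C(a)\}$ and $w_H^*(a)=w_L^*(a)+C'(a)=\max\{C'(a),\;u+(1-a)C'(a)+C(a)\}$. Further, if $a\in(0,1)$, then every optimal solution of the problem restricted to effort level $a$ has promised wages $w_L^*(a)$ and $w_H^*(a)$.
   Context: Fix $P>0$, $y_H>y_L\ge 0$, a real number $u$ (reservation utility) and $\gamma\in(0,1]$ (inspection probability). Let $C:[0,1)\to\mathbb{R}$ be the worker's effort cost: $C(0)=0$, $C$ increasing, strictly convex, twice differentiable, $C(a)\to\infty$ as $a\to1$. Let $\eta:[0,\infty)\to\mathbb{R}$ be the penalty: strictly convex, increasing, twice differentiable, $\eta(0)=0$. The one-shot wage theft problem is: choose $a,w_H,w_L,b_H,b_L$ to maximize the employer profit $a\,(Py_H-w_H+b_H-\gamma\eta(b_H))+(1-a)\,(Py_L-w_L+b_L-\gamma\eta(b_L))$ subject to (incentive compatibility) $a\in\arg\max_{a'\in[0,1)}\{a'w_H+(1-a')w_L-C(a')\}$; (individual rationality) $a w_H+(1-a)w_L-C(a)\ge u$; $w_H,w_L\ge 0$; $0\le b_L\le w_L$, $0\le b_H\le w_H$; $a\in[0,1)$. The problem restricted to effort level $a$ is the same problem with $a$ fixed. The principal's ideal wage theft $\beta\ge0$ is the value with $\gamma\eta'(\beta)=1$ (assumed to exist). *)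

(* Defs.v *)
From Stdlib Require Import Reals Lra.
Open Scope R_scope.

(* f' is the derivative of f on the set D at every point x of D, where the
   limit is taken within D \ {x} (so at an endpoint of an interval it is the
   one-sided derivative). *)
Definition deriv_on (D : R -> Prop) (f f' : R -> R) : Prop :=
  forall x, D x ->
    limit1_in (fun y => (f y - f x) / (y - x)) (fun y => D y /\ y <> x) (f' x) x.

Definition Ico01 (x : R) : Prop := 0 <= x < 1.
Definition Ici0 (x : R) : Prop := 0 <= x.

Definition strictly_increasing_on (D : R -> Prop) (f : R -> R) : Prop :=
  forall x y, D x -> D y -> x < y -> f x < f y.

Definition strictly_convex_on (D : R -> Prop) (f : R -> R) : Prop :=
  forall x y t, D x -> D y -> x <> y -> 0 < t < 1 ->
    f (t * x + (1 - t) * y) < t * f x + (1 - t) * f y.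

Definition cost_assumptions (C Cp Cpp : R -> R) : Prop :=
  C 0 = 0 /\
  strictly_increasing_on Ico01 C /\
  strictly_convex_on Ico01 C /\
  deriv_on Ico01 C Cp /\
  deriv_on Ico01 Cp Cpp /\
  (forall M, exists d, 0 < d /\ forall a, 0 <= a < 1 -> 1 - d < a -> M < C a).

Definition penalty_assumptions (eta etap etapp : R -> R) : Prop :=
  eta 0 = 0 /\
  strictly_increasing_on Ici0 eta /\
  strictly_convex_on Ici0 eta /\
  deriv_on Ici0 eta etap /\
  deriv_on Ici0 etap etapp.

Definition profit (P yH yL gamma : R) (eta : R -> R)
  (a wH wL bH bL : R) : R :=
  a * (P * yH - wH + bH - gamma * eta bH)
  + (1 - a) * (P * yL - wL + bL - gamma * eta bL).

Definition IC (C : R -> R) (a wH wL : R) : Prop :=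
  forall a', 0 <= a' < 1 ->
    a' * wH + (1 - a') * wL - C a' <= a * wH + (1 - a) * wL - C a.

Definition IR (C : R -> R) (u a wH wL : R) : Prop :=
  a * wH + (1 - a) * wL - C a >= u.

Definition feasible_at (C : R -> R) (u a wH wL bH bL : R) : Prop :=
  IC C a wH wL /\ IR C u a wH wL /\
  0 <= wH /\ 0 <= wL /\
  0 <= bL <= wL /\ 0 <= bH <= wH.

Definition optimal_at (P yH yL u gamma : R) (C eta : R -> R)
  (a wH wL bH bL : R) : Prop :=
  feasible_at C u a wH wL bH bL /\
  forall wH' wL' bH' bL', feasible_at C u a wH' wL' bH' bL' ->
    profit P yH yL gamma eta a wH' wL' bH' bL'
    <= profit P yH yL gamma eta a wH wL bH bL.

Definition wLstar (C Cp : R -> R) (u a : R) : R :=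
  Rmax 0 (u - a * Cp a + C a).

Definition wHstar (C Cp : R -> R) (u a : R) : R :=
  wLstar C Cp u a + Cp a.

(* Main.v *)
From Pilot Require Import Defs.
From Stdlib Require Import Psatz.
From Stdlib Require Import Reals Lra.
Open Scope R_scope.

Lemma lim_le (q : R -> R) (Dx : R -> Prop) L x M :
  limit1_in q Dx L x ->
  (forall d, 0 < d -> exists y, Dx y /\ Rabs (y - x) < d /\ q y <= M) -> L <= M.
Proof.
  intros Hl Hp. destruct (Rle_lt_dec L M) as [h|h]; [exact h|].
  destruct (Hl (L - M)) as [alp [Ha Hb]]; [lra|].
  destruct (Hp alp Ha) as [y [Hy1 [Hy2 Hy3]]].
  assert (Hc := Hb y (conj Hy1 Hy2)). simpl in Hc. unfold R_dist in Hc.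
  apply Rabs_def2 in Hc. lra.
Qed.

Lemma lim_ge (q : R -> R) (Dx : R -> Prop) L x M :
  limit1_in q Dx L x ->
  (forall d, 0 < d -> exists y, Dx y /\ Rabs (y - x) < d /\ M <= q y) -> M <= L.
Proof.
  intros Hl Hp. destruct (Rle_lt_dec M L) as [h|h]; [exact h|].
  destruct (Hl (M - L)) as [alp [Ha Hb]]; [lra|].
  destruct (Hp alp Ha) as [y [Hy1 [Hy2 Hy3]]].
  assert (Hc := Hb y (conj Hy1 Hy2)). simpl in Hc. unfold R_dist in Hc.
  apply Rabs_def2 in Hc. lra.
Qed.

Lemma pick_right x r d : 0 < r -> 0 < d ->
  exists y, x < y < x + r /\ Rabs (y - x) < d.
Proof.
  intros hr hd. assert (h := Rmin_pos d r hd hr).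
  assert (h1 := Rmin_l d r). assert (h2 := Rmin_r d r).
  exists (x + Rmin d r / 2). split; [lra|].
  rewrite Rabs_pos_eq; lra.
Qed.

Lemma pick_left x r d : 0 < r -> 0 < d ->
  exists y, x - r < y < x /\ Rabs (y - x) < d.
Proof.
  intros hr hd. assert (h := Rmin_pos d r hd hr).
  assert (h1 := Rmin_l d r). assert (h2 := Rmin_r d r).
  exists (x - Rmin d r / 2). split; [lra|].
  rewrite Rabs_left; lra.
Qed.

Lemma lim_le_right (q : R -> R) D L x M r :
  limit1_in q (fun y => D y /\ y <> x) L x -> 0 < r ->
  (forall y, x < y < x + r -> D y /\ q y <= M) -> L <= M.
Proof.
  intros Hl hr H. apply (lim_le q _ L x M Hl). intros d hd.
  destruct (pick_right x r d hr hd) as [y [h1 h2]].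
  destruct (H y h1). exists y. repeat split; auto; lra.
Qed.

Lemma lim_ge_right (q : R -> R) D L x M r :
  limit1_in q (fun y => D y /\ y <> x) L x -> 0 < r ->
  (forall y, x < y < x + r -> D y /\ M <= q y) -> M <= L.
Proof.
  intros Hl hr H. apply (lim_ge q _ L x M Hl). intros d hd.
  destruct (pick_right x r d hr hd) as [y [h1 h2]].
  destruct (H y h1). exists y. repeat split; auto; lra.
Qed.

Lemma lim_le_left (q : R -> R) D L x M r :
  limit1_in q (fun y => D y /\ y <> x) L x -> 0 < r ->
  (forall y, x - r < y < x -> D y /\ q y <= M) -> L <= M.
Proof.
  intros Hl hr H. apply (lim_le q _ L x M Hl). intros d hd.
  destruct (pick_left x r d hr hd) as [y [h1 h2]].
  destruct (H y h1). exists y. repeat split; auto; lra.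
Qed.

Lemma lim_ge_left (q : R -> R) D L x M r :
  limit1_in q (fun y => D y /\ y <> x) L x -> 0 < r ->
  (forall y, x - r < y < x -> D y /\ M <= q y) -> M <= L.
Proof.
  intros Hl hr H. apply (lim_ge q _ L x M Hl). intros d hd.
  destruct (pick_left x r d hr hd) as [y [h1 h2]].
  destruct (H y h1). exists y. repeat split; auto; lra.
Qed.

Lemma div_le d A M : 0 < d -> A <= M * d -> A / d <= M.
Proof.
  intros hd h. unfold Rdiv. apply Rmult_le_reg_r with d; [lra|].
  rewrite Rmult_assoc, Rinv_l; lra.
Qed.

Lemma div_ge d A M : 0 < d -> M * d <= A -> M <= A / d.
Proof.
  intros hd h. unfold Rdiv. apply Rmult_le_reg_r with d; [lra|].
  rewrite Rmult_assoc, Rinv_l; lra.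
Qed.

Lemma div_le_neg d A M : d < 0 -> M * d <= A -> A / d <= M.
Proof.
  intros hd h. replace (A / d) with ((- A) / (- d)) by (field; lra).
  apply div_le; lra.
Qed.

Lemma div_ge_neg d A M : d < 0 -> A <= M * d -> M <= A / d.
Proof.
  intros hd h. replace (A / d) with ((- A) / (- d)) by (field; lra).
  apply div_ge; lra.
Qed.

Lemma supp (D : R -> Prop) f f' :
  (forall x y s, D x -> D y -> 0 < s < 1 -> D (s * y + (1 - s) * x)) ->
  strictly_convex_on D f -> deriv_on D f f' ->
  forall x y, D x -> D y -> f x + f' x * (y - x) <= f y.
Proof.
  intros Hconv Hsc Hd x y Dx Dy.
  destruct (Rtotal_order x y) as [h|[h|h]].
  - set (M := (f y - f x) / (y - x)).
    assert (HM : M * (y - x) = f y - f x) by (unfold M; field; lra).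
    assert (f' x <= M).
    { apply (lim_le_right _ D (f' x) x M (y - x) (Hd x Dx)); [lra|].
      intros z hz. set (s := (z - x) / (y - x)).
      assert (hs : 0 < s < 1).
      { unfold s; split.
        - apply Rdiv_lt_0_compat; lra.
        - apply Rmult_lt_reg_r with (y - x); [lra|].
          unfold Rdiv; rewrite Rmult_assoc, Rinv_l; lra. }
      assert (hz' : z = s * y + (1 - s) * x) by (unfold s; field; lra).
      assert (Dz : D z) by (rewrite hz'; apply Hconv; auto).
      split; [exact Dz|].
      assert (hc := Hsc y x s Dy Dx ltac:(lra) hs).
      rewrite <- hz' in hc.
      apply div_le; [lra|].
      replace (M * (z - x)) with (s * (f y - f x)) by (unfold s, M; field; lra).
      lra. }
    assert (f' x * (y - x) <= M * (y - x)) by (apply Rmult_le_compat_r; lra).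
    lra.
  - subst. lra.
  - set (M := (f y - f x) / (y - x)).
    assert (HM : M * (y - x) = f y - f x) by (unfold M; field; lra).
    assert (M <= f' x).
    { apply (lim_ge_left _ D (f' x) x M (x - y) (Hd x Dx)); [lra|].
      intros z hz. set (s := (x - z) / (x - y)).
      assert (hs : 0 < s < 1).
      { unfold s; split.
        - apply Rdiv_lt_0_compat; lra.
        - apply Rmult_lt_reg_r with (x - y); [lra|].
          unfold Rdiv; rewrite Rmult_assoc, Rinv_l; lra. }
      assert (hz' : z = s * y + (1 - s) * x) by (unfold s; field; lra).
      assert (Dz : D z) by (rewrite hz'; apply Hconv; auto).
      split; [exact Dz|].
      assert (hc := Hsc y x s Dy Dx ltac:(lra) hs).
      rewrite <- hz' in hc.
      apply div_ge_neg; [lra|].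
      replace (M * (z - x)) with (s * (f y - f x)) by (unfold s, M; field; lra).
      lra. }
    assert (f' x * (y - x) <= M * (y - x)).
    { nra. }
    lra.
Qed.

Lemma Ico01_conv : forall x y s, Ico01 x -> Ico01 y -> 0 < s < 1 -> Ico01 (s * y + (1 - s) * x).
Proof. unfold Ico01; intros; split; nra. Qed.

Lemma Ici0_conv : forall x y s, Ici0 x -> Ici0 y -> 0 < s < 1 -> Ici0 (s * y + (1 - s) * x).
Proof. unfold Ici0; intros; nra. Qed.

Lemma Cp_nonneg C Cp Cpp a : cost_assumptions C Cp Cpp -> 0 <= a < 1 -> 0 <= Cp a.
Proof.
  intros [H0 [Hinc [Hcv [Hd [Hd2 Hinf]]]]] Ha.
  apply (lim_ge_right _ Ico01 (Cp a) a 0 (1 - a) (Hd a Ha)); [lra|].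
  intros y hy. assert (Dy : Ico01 y) by (unfold Ico01; lra). split; [exact Dy|].
  assert (h := Hinc a y Ha Dy ltac:(lra)).
  apply div_ge; lra.
Qed.

Lemma IC_eq C Cp Cpp a wH wL : cost_assumptions C Cp Cpp -> 0 < a < 1 ->
  IC C a wH wL -> wH - wL = Cp a.
Proof.
  intros [H0 [Hinc [Hcv [Hd [Hd2 Hinf]]]]] Ha HIC.
  assert (Da : Ico01 a) by (unfold Ico01; lra).
  assert (wH - wL <= Cp a).
  { apply (lim_ge_right _ Ico01 (Cp a) a (wH - wL) (1 - a) (Hd a Da)); [lra|].
    intros y hy. assert (Dy : Ico01 y) by (unfold Ico01; lra). split; [exact Dy|].
    assert (h := HIC y Dy). apply div_ge; lra. }
  assert (Cp a <= wH - wL).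
  { apply (lim_le_left _ Ico01 (Cp a) a (wH - wL) a (Hd a Da)); [lra|].
    intros y hy. assert (Dy : Ico01 y) by (unfold Ico01; lra). split; [exact Dy|].
    assert (h := HIC y Dy). apply div_le_neg; lra. }
  lra.
Qed.

Theorem proposition2
  (P yH yL u gamma : R) (C Cp Cpp eta etap etapp : R -> R)
  (HP : 0 < P) (HyL : 0 <= yL) (Hy : yL < yH)
  (Hgamma : 0 < gamma <= 1)
  (HC : cost_assumptions C Cp Cpp)
  (Heta : penalty_assumptions eta etap etapp)
  (Hbeta : exists beta, 0 <= beta /\ gamma * etap beta = 1) :
  forall a, 0 <= a < 1 ->
    wHstar C Cp u a = Rmax (Cp a) (u + (1 - a) * Cp a + C a) /\
    (exists bH bL,
        optimal_at P yH yL u gamma C eta a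
          (wHstar C Cp u a) (wLstar C Cp u a) bH bL) /\
    (0 < a -> forall wH wL bH bL,
        optimal_at P yH yL u gamma C eta a wH wL bH bL ->
        wL = wLstar C Cp u a /\ wH = wHstar C Cp u a).
Proof.
  intros a Ha.
  destruct Hbeta as [beta [Hb0 Hb1]].
  pose proof HC as HC'.
  destruct HC' as [C0 [Cinc [Ccv [Cd [Cd2 Cinf]]]]].
  destruct Heta as [e0 [einc [ecv [ed ed2]]]].
  set (g := fun b => b - gamma * eta b).
  set (V := fun w => - w + g (Rmin w beta)).
  assert (eta_le : forall x y, 0 <= x -> x <= y -> eta x <= eta y).
  { intros x y hx hxy. destruct (Req_dec x y) as [->|hne]; [lra|].
    left; apply einc; unfold Ici0; lra. }
  assert (gbeta : forall b, 0 <= b -> g b <= g beta).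
  { intros b hb. unfold g.
    assert (hs := supp Ici0 eta etap Ici0_conv ecv ed beta b Hb0 hb).
    assert (gamma * (eta beta + etap beta * (b - beta)) <= gamma * eta b)
      by (apply Rmult_le_compat_l; lra).
    assert (gamma * (eta beta + etap beta * (b - beta)) = gamma * eta beta + (b - beta)).
    { rewrite Rmult_plus_distr_l, <- Rmult_assoc, Hb1. ring. }
    lra. }
  assert (gmono : forall b w, 0 <= b -> b <= w -> w <= beta -> g b <= g w).
  { intros b w hb hbw hwb.
    destruct (Req_dec b w) as [->|hne1]; [lra|].
    destruct (Req_dec w beta) as [->|hne2]; [apply gbeta; lra|].
    set (t := (beta - w) / (beta - b)).
    assert (ht : 0 < t < 1).
    { unfold t; split.
      - apply Rdiv_lt_0_compat; lra.
      - apply Rmult_lt_reg_r with (beta - b); [lra|].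
        unfold Rdiv; rewrite Rmult_assoc, Rinv_l; lra. }
    assert (hw : w = t * b + (1 - t) * beta) by (unfold t; field; lra).
    assert (hc := ecv b beta t ltac:(unfold Ici0; lra) ltac:(unfold Ici0; lra) ltac:(lra) ht).
    rewrite <- hw in hc.
    assert (hg := gbeta b hb). unfold g in hg |- *.
    assert (gamma * eta w <= gamma * (t * eta b + (1 - t) * eta beta))
      by (apply Rmult_le_compat_l; lra).
    assert ((1 - t) * (gamma * (eta beta - eta b)) <= (1 - t) * (beta - b))
      by (apply Rmult_le_compat_l; lra).
    assert ((1 - t) * (beta - b) = w - b) by (rewrite hw; ring).
    nra. }
  assert (payoff : forall b w, 0 <= b <= w -> - w + g b <= V w).
  { intros b w [hb hbw]. unfold V, Rmin. destruct (Rle_dec w beta).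
    - assert (g b <= g w) by (apply gmono; lra). lra.
    - assert (g b <= g beta) by (apply gbeta; lra). lra. }
  assert (Vstrict : forall w1 w2, 0 <= w1 -> w1 < w2 -> V w2 < V w1).
  { intros w1 w2 h1 h12. unfold V, g, Rmin.
    destruct (Rle_dec w1 beta); destruct (Rle_dec w2 beta).
    - assert (eta w1 < eta w2) by (apply einc; unfold Ici0; lra).
      assert (gamma * eta w1 < gamma * eta w2) by (apply Rmult_lt_compat_l; lra).
      lra.
    - assert (eta w1 <= eta beta) by (apply eta_le; lra).
      assert (gamma * eta w1 <= gamma * eta beta) by (apply Rmult_le_compat_l; lra).
      lra.
    - lra.
    - lra. }
  assert (Vmono : forall w1 w2, 0 <= w1 -> w1 <= w2 -> V w2 <= V w1).
  { intros w1 w2 h1 h12. destruct (Req_dec w1 w2) as [->|]; [lra|].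
    left; apply Vstrict; lra. }
  assert (Cpa := Cp_nonneg C Cp Cpp a HC Ha).
  set (wL0 := wLstar C Cp u a).
  assert (HwL0a : 0 <= wL0) by (unfold wL0, wLstar; apply Rmax_l).
  assert (HwL0b : u - a * Cp a + C a <= wL0) by (unfold wL0, wLstar; apply Rmax_r).
  assert (bound : forall wH wL bH bL, feasible_at C u a wH wL bH bL ->
            profit P yH yL gamma eta a wH wL bH bL
            <= a * (P * yH + V wH) + (1 - a) * (P * yL + V wL)).
  { intros wH wL bH bL [_ [_ [hwH [hwL [hbL hbH]]]]].
    assert (h1 := payoff bH wH hbH). assert (h2 := payoff bL wL hbL).
    unfold profit. unfold g in h1, h2.
    assert (a * (- wH + (bH - gamma * eta bH)) <= a * V wH) by (apply Rmult_le_compat_l; lra).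
    assert ((1 - a) * (- wL + (bL - gamma * eta bL)) <= (1 - a) * V wL) by (apply Rmult_le_compat_l; lra).
    lra. }
  assert (lower : forall wH wL bH bL, feasible_at C u a wH wL bH bL ->
            wL0 <= wL /\ (0 < a -> wH - wL = Cp a)).
  { intros wH wL bH bL [hIC [hIR [hwH [hwL _]]]].
    assert (hd : 0 < a -> wH - wL = Cp a).
    { intros ha. apply (IC_eq C Cp Cpp a); auto; lra. }
    split; [|exact hd].
    unfold wL0, wLstar, Pilot.Defs.IR in *. apply Rmax_lub; [lra|].
    destruct (Rtotal_order 0 a) as [ha|[ha|ha]]; [|subst a; lra|lra].
    assert (hd' := hd ha). nra. }
  set (wH0 := wHstar C Cp u a).
  assert (HwH0 : wH0 = wL0 + Cp a) by reflexivity.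
  set (bH0 := Rmin wH0 beta). set (bL0 := Rmin wL0 beta).
  assert (feas0 : feasible_at C u a wH0 wL0 bH0 bL0).
  { split; [|split; [|split; [|split; [|split]]]].
    - intros a' ha'.
      assert (hs := supp Ico01 C Cp Ico01_conv Ccv Cd a a' Ha ha').
      rewrite HwH0. lra.
    - unfold Pilot.Defs.IR. rewrite HwH0. lra.
    - lra.
    - lra.
    - unfold bL0, Rmin; destruct (Rle_dec wL0 beta); lra.
    - unfold bH0, Rmin; destruct (Rle_dec wH0 beta); lra. }
  assert (prof0 : profit P yH yL gamma eta a wH0 wL0 bH0 bL0
                  = a * (P * yH + V wH0) + (1 - a) * (P * yL + V wL0)).
  { unfold profit, V, g, bH0, bL0. ring. }
  split; [|split].
  - rewrite HwH0; unfold wL0, wLstar, Rmax.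
    destruct (Rle_dec 0 (u - a * Cp a + C a));
    destruct (Rle_dec (Cp a) (u + (1 - a) * Cp a + C a)); nra.
  - exists bH0, bL0. split; [exact feas0|].
    intros wH' wL' bH' bL' hf.
    rewrite prof0. eapply Rle_trans; [apply (bound _ _ _ _ hf)|].
    destruct (lower _ _ _ _ hf) as [hl hd].
    assert (V wL' <= V wL0) by (apply Vmono; lra).
    assert ((1 - a) * V wL' <= (1 - a) * V wL0) by (apply Rmult_le_compat_l; lra).
    destruct (Rtotal_order 0 a) as [ha|[ha|ha]]; [|subst a; lra|lra].
    assert (hd' := hd ha).
    assert (V wH' <= V wH0) by (apply Vmono; lra).
    assert (a * V wH' <= a * V wH0) by (apply Rmult_le_compat_l; lra).
    lra.
  - intros ha wH wL bH bL [hf hopt].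
    destruct (lower _ _ _ _ hf) as [hl hd].
    assert (hd' := hd ha).
    assert (hp := hopt wH0 wL0 bH0 bL0 feas0).
    assert (hb := bound _ _ _ _ hf).
    destruct (Req_dec wL wL0) as [e|ne].
    + split; [exact e|]. fold wH0. lra.
    + exfalso.
      assert (V wL < V wL0) by (apply Vstrict; lra).
      assert (V wH < V wH0) by (apply Vstrict; lra).
      assert ((1 - a) * V wL < (1 - a) * V wL0) by (apply Rmult_lt_compat_l; lra).
      assert (a * V wH < a * V wH0) by (apply Rmult_lt_compat_l; lra).
      lra.
Qed.
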